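(* Let $0<A,B\le1$ with $L(A,B)<R(A,B)$. Then for $U\in[L(A,B),R(A,B)]$, \[ \frac1\pi G'_{A,B}(U)=(A+B)\sin(\pi U)+B\kappa\sin(\pi M(U))+A\varepsilon\sin(\pi N(U)), \] and $G_{A,B}$ is strictly increasing on $[L(A,B),R(A,B)]$.
   Context: For $0<A,B\le1$ put $\kappa=\sqrt{1-A^2}$, $\varepsilon=\sqrt{1-B^2}$, $P=P(A,B)=\frac{1+AB}{B(A+B)}$, $M(U)=\kappa(P-U)$, $N(U)=\varepsilon\left(U+\frac{\kappa^2}{A(A+B)}\right)$, and $G_{A,B}(U)=B\cos(\pi M(U))-A\cos(\pi N(U))-(A+B)\cos(\pi U)$. Further $L(A,B)=\frac{\kappa}{1+\kappa}\frac{1+AB}{B(A+B)}$ and $R(A,B)=\frac{1-\varepsilon\kappa^2/[A(A+B)]}{1+\varepsilon}$. *)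

(* Defs.v *)
From Stdlib Require Import Reals.
Open Scope R_scope.

Definition kap (A : R) : R := sqrt (1 - A ^ 2).
Definition eps (B : R) : R := sqrt (1 - B ^ 2).
Definition PAB (A B : R) : R := (1 + A * B) / (B * (A + B)).
Definition Mf (A B U : R) : R := kap A * (PAB A B - U).
Definition Nf (A B U : R) : R := eps B * (U + kap A ^ 2 / (A * (A + B))).
Definition Gf (A B U : R) : R :=
  B * cos (PI * Mf A B U) - A * cos (PI * Nf A B U) - (A + B) * cos (PI * U).
Definition Lb (A B : R) : R := kap A / (1 + kap A) * ((1 + A * B) / (B * (A + B))).
Definition Rb (A B : R) : R :=
  (1 - eps B * kap A ^ 2 / (A * (A + B))) / (1 + eps B).

(* Main.v *)
Require Import Defs.
From Stdlib Require Import Reals Lra Psatz.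
From Coquelicot Require Import Coquelicot.
Open Scope R_scope.

Lemma Gderiv (A B U : R) :
  derivable_pt_lim (Gf A B) U
       (PI * ((A + B) * sin (PI * U) + B * kap A * sin (PI * Mf A B U)
              + A * eps B * sin (PI * Nf A B U))).
Proof.
  apply is_derive_Reals. unfold Gf, Mf, Nf.
  auto_derive; auto. replace (kap A * (kap A * 1)) with (kap A ^ 2) by ring. replace (PAB A B + - U) with (PAB A B - U) by ring. ring.
Qed.

Theorem lemma3p3 (A B : R) (hA : 0 < A <= 1) (hB : 0 < B <= 1)
  (hLR : Lb A B < Rb A B) :
  (forall U : R, Lb A B <= U <= Rb A B ->
     derivable_pt_lim (Gf A B) U
       (PI * ((A + B) * sin (PI * U) + B * kap A * sin (PI * Mf A B U)
              + A * eps B * sin (PI * Nf A B U)))) /\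
  (forall U V : R, Lb A B <= U <= Rb A B -> Lb A B <= V <= Rb A B ->
     U < V -> Gf A B U < Gf A B V).
Proof.
  split; [intros; apply Gderiv|].
  intros U V HU HV HUV.
  destruct (MVT_cor2 (Gf A B) (fun U => PI * ((A + B) * sin (PI * U) + B * kap A * sin (PI * Mf A B U)
              + A * eps B * sin (PI * Nf A B U))) U V HUV (fun c _ => Gderiv A B c))
    as [c [Hc Hcr]].
  assert (Hk : 0 <= kap A) by apply sqrt_pos.
  assert (He : 0 <= eps B) by apply sqrt_pos.
  assert (HP : 1 <= PAB A B).
  { unfold PAB. apply Rcomplements.Rle_div_r. nra. nra. }
  assert (HL0 : 0 <= Lb A B).
  { unfold Lb. fold (PAB A B). apply Rmult_le_pos; [|lra].
    apply Rdiv_le_0_compat; lra. }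
  assert (HQ : 0 <= kap A ^ 2 / (A * (A + B))).
  { apply Rdiv_le_0_compat; nra. }
  assert (HR1 : Rb A B <= 1).
  { unfold Rb. apply Rcomplements.Rle_div_l. lra.
    assert (0 <= eps B * kap A ^ 2 / (A * (A + B))).
    { unfold Rdiv. rewrite Rmult_assoc. apply Rmult_le_pos; auto. }
    lra. }
  assert (c0 : 0 < c) by lra.
  assert (c1 : c < 1) by lra.
  assert (HM0 : 0 <= Mf A B c) by (unfold Mf; nra).
  assert (HMc : Mf A B c <= c).
  { unfold Mf. unfold Lb in HU. fold (PAB A B) in HU.
    assert (kap A / (1 + kap A) * PAB A B < c) by lra.
    unfold Rdiv in H. 
    apply (Rmult_lt_compat_l (1 + kap A)) in H; [|lra].
    replace ((1 + kap A) * (kap A * / (1 + kap A) * PAB A B)) with (kap A * PAB A B) in H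
      by (field; lra).
    nra. }
  assert (HN0 : 0 <= Nf A B c) by (unfold Nf; nra).
  assert (HNc : Nf A B c <= 1 - c).
  { unfold Nf. unfold Rb in HV.
    assert (c < (1 - eps B * kap A ^ 2 / (A * (A + B))) / (1 + eps B)) by lra.
    apply (Rmult_lt_compat_l (1 + eps B)) in H; [|lra].
    replace ((1 + eps B) * ((1 - eps B * kap A ^ 2 / (A * (A + B))) / (1 + eps B)))
      with (1 - eps B * (kap A ^ 2 / (A * (A + B)))) in H by (field; nra).
    nra. }
  assert (PI0 : 0 < PI) by apply PI_RGT_0.
  assert (s1 : 0 < sin (PI * c)) by (apply sin_gt_0; nra).
  assert (s2 : 0 <= sin (PI * Mf A B c)) by (apply sin_ge_0; nra).
  assert (s3 : 0 <= sin (PI * Nf A B c)) by (apply sin_ge_0; nra).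
  assert (0 < PI * ((A + B) * sin (PI * c) + B * kap A * sin (PI * Mf A B c)
              + A * eps B * sin (PI * Nf A B c))).
  { apply Rmult_lt_0_compat; auto.
    assert (0 <= B * kap A * sin (PI * Mf A B c)) by (apply Rmult_le_pos; nra).
    assert (0 <= A * eps B * sin (PI * Nf A B c)) by (apply Rmult_le_pos; nra).
    nra. }
  nra.
Qed.
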